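(* Let $A$ be a finite-dimensional simple associative algebra over a field. If $c\in A$ satisfies $cA\subseteq[A,A]$, then $c=0$.
   Context: $[A,A]$ denotes the linear span of all commutators $xy-yx$, $x,y\in A$. *)

(* Defs.v *)
From HB Require Import structures.
From mathcomp Require Import all_boot all_algebra all_field.
Set Implicit Arguments. Unset Strict Implicit. Unset Printing Implicit Defensive.
Import GRing.Theory.
Local Open Scope ring_scope.

(* A finite-dimensional (unital) associative algebra over a field F is an
   [falgType F]. *)

Definition is_two_sided_ideal (F : fieldType) (A : falgType F) (I : {vspace A}) : Prop :=
  forall a x : A, x \in I -> (a * x \in I) /\ (x * a \in I).

(* A is simple: it is nonzero (automatic: 1 != 0 in an falgType) and its only
   two-sided ideals are 0 and A. *)
Definition simple_algebra (F : fieldType) (A : falgType F) : Prop :=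
  (1 : A) != 0 /\
  forall I : {vspace A}, is_two_sided_ideal I -> I = 0%VS \/ I = fullv.

(* x lies in [A,A], the linear span of all commutators a b - b a.
   (Scalars are absorbed: k (ab - ba) = (ka) b - b (ka), so finite sums of
   commutators are exactly the linear span.) *)
Definition in_commutator_span (F : fieldType) (A : falgType F) (x : A) : Prop :=
  exists (n : nat) (a b : 'I_n -> A), x = \sum_(i < n) (a i * b i - b i * a i).

(* Main.v *)
Require Import Defs.
From HB Require Import structures.
From mathcomp Require Import all_boot all_algebra all_field.
From Stdlib Require Classical_Prop Classical_Pred_Type ClassicalEpsilon.
Set Implicit Arguments. Unset Strict Implicit. Unset Printing Implicit Defensive.
Import GRing.Theory.
Local Open Scope ring_scope.

Section S.
Variables (F : fieldType) (A : falgType F).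
Hypothesis Asimple : simple_algebra A.

Definition central (x : A) := forall y : A, x * y = y * x.

Lemma one_neq0 : (1 : A) != 0. Proof. by case: Asimple. Qed.

Lemma ideal_one (x : A) : x != 0 ->
  exists (g : 'I_(\dim {:A}) -> A), 1 = \sum_l g l * x * (vbasis {:A})`_l.
Proof.
move=> nx0.
set N := \dim {:A}; set b := vbasis {:A}.
pose I := (\sum_(l < N) limg (amulr (x * b`_l)%R))%VS.
have memI u v : u * x * v \in I.
  rewrite (coord_vbasis (memvf v)) mulr_sumr; apply: memv_suml => l _.
  rewrite -scalerAr; apply: memvZ.
  apply: (subvP (sumv_sup l (isT : predT l) (subvv (limg (amulr (x * b`_l)%R))))).
  rewrite -mulrA; have -> : u * (x * b`_l) = amulr (x * b`_l) u by rewrite lfunE.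
  exact: memv_img (memvf _).
have decI y : y \in I -> exists g : 'I_N -> A, y = \sum_l g l * x * b`_l.
  case/memv_sumP => us Hus ->.
  have /fin_all_exists [g Hg] : forall l : 'I_N, exists w : A, us l = w * x * b`_l.
    move=> l; have /memv_imgP [w _ ->] := Hus l isT.
    by exists w; rewrite lfunE /= mulrA.
  by exists g; apply: eq_bigr => l _; rewrite Hg.
have idI : is_two_sided_ideal I.
  move=> a y /decI [g ->]; split.
    rewrite mulr_sumr; apply: memv_suml => l _; rewrite !mulrA; exact: memI.
  rewrite mulr_suml; apply: memv_suml => l _; rewrite -mulrA; exact: memI.
have xI : x \in I by have := memI 1 1; rewrite mul1r mulr1.
case: Asimple => _ /(_ I idI) [I0|If].
  by move: xI; rewrite I0 memv0 (negbTE nx0).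
by apply: decI; rewrite If memvf.
Qed.


Lemma central0 : central 0. Proof. by move=> y; rewrite mul0r mulr0. Qed.
Lemma centralD x y : central x -> central y -> central (x + y).
Proof. by move=> cx cy a; rewrite mulrDl mulrDr cx cy. Qed.
Lemma centralN x : central x -> central (- x).
Proof. by move=> cx a; rewrite mulNr mulrN cx. Qed.
Lemma centralM x y : central x -> central y -> central (x * y).
Proof. by move=> cx cy a; rewrite -mulrA cy mulrA cx mulrA. Qed.
Lemma centralB x y : central x -> central y -> central (x - y).
Proof. by move=> cx cy; apply: centralD => //; apply: centralN. Qed.
Lemma central1 : central 1. Proof. by move=> a; rewrite mul1r mulr1. Qed.
Lemma central_alg (k : F) : central (k%:A).
Proof. by move=> a; rewrite mulr_algl -scalerAr mulr1. Qed.
Lemma central_sum (I : Type) (r : seq I) (P : pred I) (f : I -> A) :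
  (forall i, P i -> central (f i)) -> central (\sum_(i <- r | P i) f i).
Proof.
move=> H; apply: (big_ind central) => //; [exact: central0 | exact: centralD].
Qed.

Lemma central_inv z : central z -> z != 0 -> exists y, central y /\ z * y = 1.
Proof.
move=> cz nz0; have [g Hg] := ideal_one nz0.
set y := \sum_l g l * (vbasis {:A})`_l.
have zy : z * y = 1.
  rewrite Hg /y mulr_sumr; apply: eq_bigr => l _.
  by rewrite mulrA cz.
have yz : y * z = 1 by rewrite -cz.
exists y; split => // a.
by rewrite -[y * a]mulr1 -zy mulrA -(mulrA y) -cz mulrA yz mul1r.
Qed.

Definition Zindep m (w : 'I_m -> A) :=
  forall z : 'I_m -> A, (forall i, central (z i)) ->
    \sum_i z i * w i = 0 -> forall i, z i = 0.
Definition Zspan m (w : 'I_m -> A) (u : A) :=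
  exists z : 'I_m -> A, (forall i, central (z i)) /\ u = \sum_i z i * w i.

Lemma Zindep_bound m (w : 'I_m -> A) : Zindep w -> (m <= \dim {:A})%N.
Proof.
move=> Hw; pose X := [tuple w i | i < m].
have fX : free X.
  apply/freeP => k Hk i.
  have Hs : \sum_i (k i)%:A * w i = 0.
    rewrite -[RHS]Hk; apply: eq_bigr => j _.
    by rewrite mulr_algl (nth_mktuple _ 0 j).
  have /eqP := Hw (fun i => (k i)%:A) (fun i => central_alg (k i)) Hs i.
  by rewrite scaler_eq0 oner_eq0 orbF => /eqP.
have : \dim <<X>> = m by rewrite (eqP fX) size_tuple.
by move=> <-; apply: dimvS; apply: subvf.
Qed.


Lemma Zindep_ext m (w : 'I_m -> A) u : Zindep w -> ~ Zspan w u ->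
  Zindep (fun i : 'I_m.+1 => if unlift ord_max i is Some j then w j else u).
Proof.
move=> Hw Hu z cz; rewrite big_ord_recr /= unlift_none.
have wid (j : 'I_m) : widen_ord (leqnSn m) j = lift ord_max j.
  by apply: val_inj; rewrite /= /bump leqNgt ltn_ord.
under eq_bigr do rewrite wid liftK.
move=> Hs.
have zm0 : z ord_max = 0.
  apply/eqP; apply/negP => /negP nz; have [y [cy yz]] := central_inv (cz ord_max) nz.
  apply: Hu; exists (fun j => - (y * z (lift ord_max j))); split.
    by move=> j; apply/centralN/centralM.
  have -> : u = y * (z ord_max * u) by rewrite mulrA cy yz mul1r.
  have -> : z ord_max * u = - \sum_(i < m) z (lift ord_max i) * w i.
    by apply/eqP; rewrite -addr_eq0 addrC Hs.
  rewrite mulrN mulr_sumr -sumrN; apply: eq_bigr => j _.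
  by rewrite mulNr mulrA.
rewrite zm0 mul0r addr0 in Hs.
have Hz := Hw (fun j => z (lift ord_max j)) (fun j => cz _) Hs.
by move=> i; case: (unliftP ord_max i) => [j ->|->].
Qed.

Lemma exists_Zbasis : exists m (w : 'I_m -> A), Zindep w /\ forall u, Zspan w u.
Proof.
apply: Classical_Prop.NNPP => H.
have all_m : forall m, exists w : 'I_m -> A, Zindep w.
  elim=> [|m [w Hw]].
    by exists (fun i => 0) => z _ _ [].
  have [u Hu] : exists u, ~ Zspan w u.
    apply: Classical_Pred_Type.not_all_ex_not => Hs; apply: H.
    by exists m, w.
  by eexists; apply: Zindep_ext Hu.
have [w Hw] := all_m (\dim {:A}).+1.
by have := Zindep_bound Hw; rewrite ltnn.
Qed.


Lemma indep_mult m (w : 'I_m -> A) : Zindep w ->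
  forall a : 'I_m -> A, (forall u, \sum_i a i * u * w i = 0) -> forall i, a i = 0.
Proof.
move=> Hw.
suff H : forall n (a : 'I_m -> A), (#|[set i | a i != 0%R]| <= n)%N ->
    (forall u, \sum_i a i * u * w i = 0) -> forall i, a i = 0.
  by move=> a; apply: (H _ a (leqnn _)).
elim=> [|n IH] a Hcard Ha i0; apply/eqP; apply: contraT => nz.
  move: Hcard; rewrite leqn0 cards_eq0 => /eqP Hemp.
  have : i0 \in [set i | a i != 0%R] by rewrite inE.
  by rewrite Hemp inE.
have [g Hg] := ideal_one nz.
set b := vbasis {:A} in Hg.
pose a' i := \sum_l g l * a i * b`_l.
have Ha' u : \sum_i a' i * u * w i = 0.
  transitivity (\sum_l g l * (\sum_i a i * (b`_l * u) * w i)).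
    under eq_bigr do rewrite !mulr_suml.
    rewrite exchange_big /=; apply: eq_bigr => l _; rewrite mulr_sumr.
    by apply: eq_bigr => i _; rewrite !mulrA.
  by rewrite big1 // => l _; rewrite Ha mulr0.
have a'i0 : a' i0 = 1 by rewrite Hg.
have supp i : a i = 0 -> a' i = 0.
  by move=> ai0; rewrite /a' big1 // => l _; rewrite ai0 mulr0 mul0r.
have ca' : forall i, central (a' i).
  move=> i y; apply/eqP; rewrite -subr_eq0; apply/eqP.
  pose b' i := a' i * y - y * a' i.
  suff : b' i = 0 by [].
  apply: (IH b'); last first.
    move=> u; transitivity (\sum_i a' i * (y * u) * w i - y * \sum_i a' i * u * w i).
      rewrite mulr_sumr -sumrB; apply: eq_bigr => j _.
      by rewrite /b' !mulrBl !mulrA.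
    by rewrite !Ha' mulr0 subr0.
  have sub : [set i | b' i != 0%R] \subset [set i | a i != 0%R] :\ i0.
    apply/subsetP => j; rewrite !inE; apply: contraR.
    rewrite negb_and !negbK => /orP [/eqP -> | /eqP aj0].
      by rewrite /b' a'i0 mulr1 mul1r subrr.
    by rewrite /b' (supp _ aj0) mul0r mulr0 subrr.
  apply: leq_trans (subset_leq_card sub) _.
  have i0in : i0 \in [set i | a i != 0%R] by rewrite inE.
  move: Hcard; rewrite (cardsD1 i0) i0in /=.
  by rewrite add1n ltnS.
have := Hw a' ca' _ i0; rewrite a'i0 => /(_ _)/eqP.
rewrite (negbTE one_neq0); apply.
by rewrite -[RHS](Ha' 1); apply: eq_bigr => i _; rewrite mulr1.
Qed.


Section Coords.
Variables (m : nat) (w : 'I_m -> A) (zeta : A -> 'I_m -> A).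
Hypothesis Hw : Zindep w.
Hypothesis Hz : forall u, (forall i, central (zeta u i)) /\ u = \sum_i zeta u i * w i.

Lemma coord_uniq (z : 'I_m -> A) u : (forall i, central (z i)) ->
  u = \sum_i z i * w i -> forall i, zeta u i = z i.
Proof.
move=> cz Hu i; apply/eqP; rewrite -subr_eq0; apply/eqP; move: i.
apply: Hw => [i|]; first by apply: centralB => //; case: (Hz u).
under eq_bigr do rewrite mulrBl.
by rewrite sumrB -(Hz u).2 -Hu subrr.
Qed.

Lemma zetaD u v i : zeta (u + v) i = zeta u i + zeta v i.
Proof.
apply: (coord_uniq (z := fun i => zeta u i + zeta v i)) => [j|].
  by apply: centralD; [case: (Hz u) | case: (Hz v)].
rewrite -[LHS]/(u + v) {1}(Hz u).2 {1}(Hz v).2 -big_split /=.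
by apply: eq_bigr => j _; rewrite mulrDl.
Qed.

Lemma zeta0 i : zeta 0 i = 0.
Proof.
by apply: (coord_uniq (z := fun _ => 0)) => [j|]; [exact: central0 | rewrite big1 // => j _; rewrite mul0r].
Qed.

Lemma zetaZ c u i : central c -> zeta (c * u) i = c * zeta u i.
Proof.
move=> cc; apply: (coord_uniq (z := fun i => c * zeta u i)) => [j|].
  by apply: centralM => //; case: (Hz u).
rewrite {1}(Hz u).2 mulr_sumr; apply: eq_bigr => j _; by rewrite mulrA.
Qed.

Lemma zetaN u i : zeta (- u) i = - zeta u i.
Proof.
by rewrite -mulN1r zetaZ ?mulN1r //; apply/centralN/central1.
Qed.

Lemma zeta_sum (I : Type) (r : seq I) (P : pred I) (f : I -> A) i :
  zeta (\sum_(j <- r | P j) f j) i = \sum_(j <- r | P j) zeta (f j) i.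
Proof. exact: (big_morph (zeta^~ i) (fun u v => zetaD u v i) (zeta0 i)). Qed.

Lemma zeta_w j i : zeta (w j) i = (i == j)%:R.
Proof.
apply: (coord_uniq (z := fun k => (k == j)%:R)) => [k|].
  by case: (k == j); [exact: central1 | exact: central0].
rewrite (bigD1 j) //= eqxx mul1r big1 ?addr0 // => k /negbTE ->.
by rewrite mul0r.
Qed.

Definition trZ (f : A -> A) := \sum_j zeta (f (w j)) j.

Definition Zlin (f : A -> A) :=
  (forall u v, f (u + v) = f u + f v) /\ f 0 = 0 /\
  (forall c u, central c -> f (c * u) = c * f u).

Lemma trZ_expand f g : Zlin f ->
  trZ (fun u => f (g u)) = \sum_j \sum_l zeta (g (w j)) l * zeta (f (w l)) j.
Proof.
move=> [fD [f0 fZ]]; apply: eq_bigr => j _.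
rewrite {1}(Hz (g (w j))).2.
rewrite (big_morph f fD f0) zeta_sum; apply: eq_bigr => l _.
by rewrite fZ ?zetaZ //; case: (Hz (g (w j))).
Qed.

Lemma trZ_comm f g : Zlin f -> Zlin g ->
  trZ (fun u => f (g u)) = trZ (fun u => g (f u)).
Proof.
move=> Hf Hg; rewrite (trZ_expand _ Hf) (trZ_expand _ Hg) exchange_big.
apply: eq_bigr => j _; apply: eq_bigr => l _.
by case: (Hz (f (w j))) => /(_ l) ->.
Qed.

Definition T (x y : A) := trZ (fun u => x * u * y).

Lemma TD x1 x2 y : T (x1 + x2) y = T x1 y + T x2 y.
Proof. by rewrite /T /trZ -big_split; apply: eq_bigr => j _; rewrite !mulrDl zetaD. Qed.

Lemma T0 y : T 0 y = 0.
Proof. by rewrite /T /trZ big1 // => j _; rewrite !mul0r zeta0. Qed.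

Lemma TN x y : T (- x) y = - T x y.
Proof. by rewrite /T /trZ -sumrN; apply: eq_bigr => j _; rewrite !mulNr zetaN. Qed.

Lemma T_comm b c y : T (b * c - c * b) y = 0.
Proof.
rewrite TD TN; apply/eqP; rewrite subr_eq0; apply/eqP.
have Hf : Zlin (fun u => b * u).
  split; [by move=> u v; rewrite mulrDr | split; [by rewrite mulr0 |]].
  by move=> z u cz; rewrite mulrA -cz mulrA.
have Hg : Zlin (fun u => c * u * y).
  split; [by move=> u v; rewrite mulrDr mulrDl | split; [by rewrite mulr0 mul0r |]].
  by move=> z u cz; rewrite mulrA -cz !mulrA.
have := trZ_comm Hf Hg; rewrite /T /trZ => E.
transitivity (\sum_j zeta (b * (c * w j * y)) j).
  by apply: eq_bigr => j _; rewrite !mulrA.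
rewrite E; apply: eq_bigr => j _; by rewrite !mulrA.
Qed.

Lemma T_span x y : in_commutator_span x -> T x y = 0.
Proof.
move=> [n [a [b ->]]].
rewrite (big_morph (T^~ y) (fun u v => TD u v y) (T0 y)) big1 // => i _.
exact: T_comm.
Qed.

Definition Gmap (a : {ffun 'I_m -> A}) : {ffun 'I_m -> A} :=
  [ffun j => \sum_i a i * w j * w i].

Fact Gmap_linear : linear Gmap.
Proof.
move=> k x y; apply/ffunP => j; rewrite !ffunE scaler_sumr -big_split.
by apply: eq_bigr => i _; rewrite !ffunE !mulrDl -!scalerAl.
Qed.

HB.instance Definition _ := GRing.isSemilinear.Build F {ffun 'I_m -> A}
  {ffun 'I_m -> A} _ Gmap (GRing.semilinear_linear Gmap_linear).

Lemma T_not_all0 : (forall x y, T x y = 0) -> False.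
Proof.
move=> HT.
have [i0 _] : exists i0 : 'I_m, True.
  apply: Classical_Prop.NNPP => H; move: one_neq0.
  rewrite (Hz 1).2 big1 ?eqxx // => i _; exfalso; apply: H; by exists i.
pose G : 'End({ffun 'I_m -> A}) := linfun Gmap.
have injG : lker G == 0%VS.
  apply/lker0P => a1 a2 E.
  apply/eqP; rewrite -subr_eq0; apply/eqP/ffunP => i; rewrite !ffunE.
  move: i; apply: (indep_mult Hw) => u.
  have E0 : Gmap (a1 - a2) = 0 by rewrite linearB /= -!(lfunE Gmap) E subrr.
  rewrite (Hz u).2 .
  transitivity (\sum_j zeta u j * (Gmap (a1 - a2)) j).
    under eq_bigr do rewrite mulr_sumr mulr_suml.
    rewrite exchange_big /=; apply: eq_bigr => j _; rewrite ffunE mulr_sumr.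
    apply: eq_bigr => i _; rewrite !mulrA; congr (_ * _ * _).
    by case: (Hz u) => /(_ j) cj _; rewrite ffunE ffunE cj.
  by rewrite big1 // => j _; rewrite E0 ffunE mulr0.
pose t : {ffun 'I_m -> A} := [ffun j => if j == i0 then w i0 else 0].
pose a := (G^-1)%VF t.
have Ga : Gmap a = t by rewrite -(lfunE Gmap) lker0_lfunVK.
have Ht1 : trZ (fun u => \sum_i a i * u * w i) = 1.
  rewrite /trZ (bigD1 i0) //= [X in _ + X]big1 ?addr0.
    have := congr1 (fun f : {ffun 'I_m -> A} => f i0) Ga; rewrite /= !ffunE eqxx => ->.
    by rewrite zeta_w eqxx.
  move=> j /negbTE nj.
  have := congr1 (fun f : {ffun 'I_m -> A} => f j) Ga; rewrite /= !ffunE nj => ->.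
  by rewrite zeta0.
have Ht0 : trZ (fun u => \sum_i a i * u * w i) = 0.
  transitivity (\sum_i T (a i) (w i)); last by rewrite big1.
  rewrite /T /trZ exchange_big /=; apply: eq_bigr => j _.
  by rewrite zeta_sum.
by move: one_neq0; rewrite -Ht1 Ht0 eqxx.
Qed.

End Coords.

End S.

Theorem lemma2p1 (F : fieldType) (A : falgType F) (c : A) :
  simple_algebra A ->
  (forall a : A, in_commutator_span (c * a)) ->
  c = 0.
Proof.
move=> Hs Hc; apply/eqP; apply: contraT => nc0.
have [g Hg] := ideal_one Hs nc0.
have [m [w [Hw Hspan]]] := exists_Zbasis Hs.
have [zeta Hz] : exists zeta : A -> 'I_m -> A,
    forall u, (forall i, central (zeta u i)) /\ u = \sum_i zeta u i * w i.
  exists (fun u => proj1_sig (ClassicalEpsilon.constructive_indefinite_description _ (Hspan u))).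
  move=> u.
  by case: (ClassicalEpsilon.constructive_indefinite_description _ (Hspan u)).
exfalso; apply: (T_not_all0 Hs Hw Hz) => x y.
rewrite -[x]mul1r Hg mulr_suml.
rewrite (big_morph (T w zeta ^~ y) (fun u v => TD Hw Hz u v y) (T0 Hw Hz y)).
rewrite big1 // => l _.
set v := (vbasis {:A})`_l.
have -> : g l * c * v * x = (g l * (c * (v * x)) - (c * (v * x)) * g l) + c * (v * x * g l).
  by rewrite !mulrA subrK.
rewrite (TD Hw Hz) (T_comm Hw Hz) add0r.
exact: (T_span Hw Hz).
Qed.
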